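(* Let $n\ge3$ and let $\mathcal{L}$ be the operator on $\mathbb{R}^{\mathbb{Z}_n}$ given by $(\mathcal{L}v)(k)=\frac12\big(v(k+1)+v(k-1)\big)$ (indices mod $n$), and let $\mathbf{e}_0\in\mathbb{R}^{\mathbb{Z}_n}$ be the indicator vector of $0$. Then for every integer $\tau\ge1$, $$\max\left\{\frac1n,\frac{1}{2\sqrt{\tau}}\right\}\le \langle \mathbf{e}_0,\mathcal{L}^{2\tau}\mathbf{e}_0\rangle\le\frac4n+\frac{1}{\sqrt{\pi\tau}}.$$
   Context: $\mathcal{L}$ is the FTCS operator in dimension $d=1$ with $r=1/2$ (i.e. $\Delta t=\Delta x^2/(2\alpha)$); it is the transition matrix of the simple random walk on the cycle $\mathbb{Z}_n$, and $\langle \mathbf{e}_0,\mathcal{L}^{2\tau}\mathbf{e}_0\rangle=\|\mathcal{L}^\tau\mathbf{e}_0\|_2^2$. *)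

(* Defs.v *)
From mathcomp Require Import all_boot all_order all_algebra.
From mathcomp Require Import all_classical all_reals all_analysis.
Set Implicit Arguments. Unset Strict Implicit. Unset Printing Implicit Defensive.
Import Order.TTheory GRing.Theory Num.Theory.
Local Open Scope ring_scope.

(* Vectors in R^{Z_n}, indices are 'I_n = {0,...,n-1} with cyclic successor
   ordS (k+1 mod n) and predecessor ord_pred (k-1 mod n). *)

Definition Lop (R : realType) (n : nat) (v : 'I_n -> R) : 'I_n -> R :=
  fun k => (v (ordS k) + v (ord_pred k)) / 2.

Definition e0 (R : realType) (n : nat) : 'I_n -> R :=
  fun k => (nat_of_ord k == 0%N)%:R.

Definition dotv (R : realType) (n : nat) (u v : 'I_n -> R) : R :=
  \sum_(k < n) u k * v k.

(* Main.v *)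
Require Import Defs.
From mathcomp Require Import all_boot all_order all_algebra.
From mathcomp Require Import all_classical all_reals all_analysis.
From mathcomp Require Import ring lra zify.
Import Order.TTheory GRing.Theory Num.Theory.
Local Open Scope ring_scope.
Section Wallis.
Variable R : realType.

Fixpoint F (k : nat) : R -> R :=
  match k with
  | 0 => fun x => x
  | 1 => fun x => - cos x
  | j.+2 => fun x => (- (sin x ^+ j.+1 * cos x) + j.+1%:R * F j x) / j.+2%:R
  end.

Lemma F_derive k (x : R) : is_derive x (1:R) (F k) (sin x ^+ k).
Proof.
elim/ltn_ind: k x => -[|[|j]] IH x.
- rewrite expr0 /=; exact: is_derive_id.
- have -> : F 1 = - (@cos R) by apply/funext => y.
  by rewrite expr1; apply: is_derive_eq; rewrite opprK.
- have -> : F j.+2 = (j.+2%:R^-1 : R) \*: (- ((@sin R ^+ j.+1) * cos) + (j.+1%:R : R) \*: F j).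
    by apply/funext => y /=; rewrite !fctE mulrC.
  have Hj := IH j (ltnW (ltnSn _)) x.
  apply: is_derive_eq.
  rewrite !fctE /= /GRing.scale /=.
  have hc : cos x ^+ 2 = 1 - sin x ^+ 2 by rewrite sin2cos2 opprB addrC subrK.
  have -> : cos x * (j.+1%:R * sin x ^+ j * cos x) = j.+1%:R * sin x ^+ j * cos x ^+ 2 by ring.
  rewrite hc !exprS.
  have hj : (j.+2%:R : R) != 0 by rewrite pnatr_eq0.
  by field.
Qed.

Definition I k := F k (pi / 2) - F k 0.

Lemma I0 : I 0 = pi / 2.
Proof. by rewrite /I /= subr0. Qed.

Lemma I1 : I 1 = 1.
Proof. by rewrite /I /= cos_pihalf cos0 oppr0 opprK add0r. Qed.

Lemma Irec k : I k.+2 = k.+1%:R / k.+2%:R * I k.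
Proof.
rewrite /I /= sin_pihalf cos_pihalf sin0 expr1n expr0n /= !mulr0 mul0r !oppr0 !add0r.
by rewrite mulrBr; congr (_ - _); rewrite mulrAC mulrC mulrA.
Qed.

Lemma Iprod k : I k * I k.+1 = pi / (2 * k.+1%:R).
Proof.
elim: k => [|k IH]; first by rewrite I0 I1 mulr1 mulr1.
rewrite Irec mulrCA [I k.+1 * _]mulrC IH.
field. have h := ler0n R k. by apply/andP; split; rewrite gt_eqF //; lra.
Qed.

Lemma Imono k : I k.+1 <= I k.
Proof.
have pi2 : 0 < pi / 2 :> R by rewrite divr_gt0 // pi_gt0.
have hd : forall x, is_derive x (1:R) (F k - F k.+1) (sin x ^+ k - sin x ^+ k.+1).
  by move=> x; apply: is_deriveB; exact: F_derive.
have dx : forall x, derivable (F k - F k.+1) x 1 by move=> x; case: (hd x).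
have [c cI H] := MVT pi2 (fun x _ => hd x)
  (derivable_within_continuous (fun x _ => dx x)).
rewrite -subr_ge0 (_ : I k - I k.+1 = (F k - F k.+1) (pi/2) - (F k - F k.+1) 0); last first.
  by rewrite /I !fctE; ring.
rewrite H subr0 mulr_ge0 //; last exact: ltW.
have sc : 0 <= sin c.
  apply: sin_ge0_pi; move: cI; rewrite in_itv /= => /andP[c0 c1].
  rewrite ltW //= (le_trans (ltW c1)) // ler_pdivrMr // ler_peMr ?pi_ge0 //.
  by rewrite ler1n.
by rewrite exprS -{1}(mul1r (sin c ^+ k)) -mulrBl mulr_ge0 ?exprn_ge0 // subr_ge0 sin_le1.
Qed.

Definition a m : R := 'C(m.*2, m)%:R / 4%:R ^+ m.

Lemma binrec m : ('C((m.+1).*2, m.+1) * m.+1 = 2 * (m.*2.+1) * 'C(m.*2, m))%N.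
Proof.
have e1 := mul_bin_diag ((m.+1).*2) m.
have e2 := mul_bin_down (m.*2.+1) m.
rewrite doubleS /= in e1 e2.
rewrite (_ : (m.*2.+1 - m = m.+1)%N) in e2; last by rewrite -addnn; lia.
move: e1 e2; set X := 'C(_, m); set Y := 'C(m.*2, m); set Z := 'C(_, m.+1).
move=> e1 e2.
apply/eqP; rewrite -(eqn_pmul2l (ltn0Sn m)); apply/eqP.
have -> : (m.+1 * (Z * m.+1) = m.+1 * (m.+1 * Z))%N by lia.
rewrite -e1.
have -> : (m.+1 * ((m.*2.+2) * X) = 2 * (m.+1 * (m.+1 * X)))%N by rewrite -addnn; lia.
rewrite -e2. rewrite -addnn; lia.
Qed.

Lemma arec m : a m.+1 = (m.*2.+1)%:R / (m.*2.+2)%:R * a m.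
Proof.
have h := congr1 (fun x : nat => x%:R : R) (binrec m).
rewrite /= !natrM in h.
rewrite /a.
have -> : ('C((m.+1).*2, m.+1)%:R : R) = 2%:R * (m.*2.+1)%:R * 'C(m.*2,m)%:R / (m.+1)%:R.
  by rewrite -h mulfK // pnatr_eq0.
rewrite exprS -!mul2n.
field.
have hm := ler0n R m.
rewrite expf_neq0 ?(gt_eqF (_ : (0:R) < 4)) //=.
by apply/andP; split; rewrite gt_eqF //; lra.
Qed.

Lemma Ieven m : I (m.*2) = pi / 2 * a m.
Proof.
elim: m => [|m IH]; first by rewrite I0 /a /= bin0 expr0 divr1 mulr1.
by rewrite doubleS Irec IH arec; ring.
Qed.

Lemma wallis m : (0 < m)%N -> pi * m%:R * a m ^+ 2 <= 1.
Proof.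
case: m => // m _.
have hp := Iprod (m.*2.+1).
have hm := Imono (m.*2.+1).
have he := Ieven m.+1.
rewrite doubleS in he.
have a0 : 0 <= a m.+1 by rewrite /a divr_ge0 // exprn_ge0.
have I0' : 0 <= I m.*2.+2 by rewrite he mulr_ge0 // divr_ge0 // pi_ge0.
have : I m.*2.+2 ^+ 2 <= pi / (2 * (m.*2.+2)%:R).
  by rewrite -hp expr2 ler_wpM2r.
rewrite he -!mul2n => H.
have hm0 := ler0n R m.
have pg := pi_gt0 R.
rewrite -(ler_pM2l pg) mulr1.
have -> : pi * (pi * m.+1%:R * a m.+1 ^+ 2) = (4 * m.+1%:R) * (pi / 2 * a m.+1) ^+ 2.
  by field.
apply: le_trans (ler_wpM2l _ H) _.
  by rewrite mulr_ge0 // ler0n.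
rewrite le_eqVlt; apply/orP; left; apply/eqP; field.
by rewrite gt_eqF //; lra.
Qed.


Lemma central_lb m : (0 < m)%N -> 1 <= 4 * m%:R * a m ^+ 2.
Proof.
case: m => // m _.
elim: m => [|m IH].
  rewrite /a /= expr1 (_ : ('C(2, 1)%:R : R) = 2) //.
  by rewrite le_eqVlt; apply/orP; left; apply/eqP; field.
rewrite arec.
set A := a m.+1 in IH *.
set k : R := m.+1%:R.
have hk : 0 <= k by rewrite /k ler0n.
have -> : (m.+2%:R : R) = k + 1 by rewrite /k -natr1.
have -> : ((m.+1).*2.+1%:R : R) = 2 * k + 1 by rewrite /k -natr1 -mul2n natrM.
have -> : ((m.+1).*2.+2%:R : R) = 2 * k + 2 by rewrite -addn2 natrD -mul2n natrM.
have -> : 4 * (k + 1) * ((2 * k + 1) / (2 * k + 2) * A) ^+ 2 = ((2 * k + 1) ^+ 2 * A ^+ 2) / (k + 1).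
  by field; rewrite gt_eqF //; lra.
rewrite ler_pdivlMr; last by lra.
rewrite mul1r.
have hA : 0 <= A ^+ 2 by apply: sqr_ge0.
have : 0 <= (k + 1) * (4 * k * A ^+ 2 - 1) by apply: mulr_ge0; lra.
nra.
Qed.

End Wallis.


Lemma pascal t (g : nat -> nat) :
  (\sum_(i < t.+2) 'C(t.+1, i) * g i =
   \sum_(i < t.+1) 'C(t, i) * g i + \sum_(i < t.+1) 'C(t, i) * g i.+1)%N.
Proof.
rewrite big_ord_recl bin0 mul1n.
under eq_bigr => i _ do rewrite lift0 binS mulnDl.
rewrite big_split /= [X in (_ = X + _)%N]big_ord_recl bin0 mul1n.
rewrite big_ord_recr /= bin_small // mul0n addn0 addnA.
by [].
Qed.

Lemma sumC t : (\sum_(i < t.+1) 'C(t, i) = 2 ^ t)%N.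
Proof.
elim: t => [|t IH]; first by rewrite big_ord1.
have H := pascal t (fun _ => 1%N).
rewrite /= !(eq_bigr _ (fun i _ => muln1 _)) in H.
by rewrite H IH expnS mul2n addnn.
Qed.

Lemma nonincr (c : nat -> nat) : (forall d, c d.+1 <= c d)%N ->
  forall d e, (d <= e)%N -> (c e <= c d)%N.
Proof.
move=> hc d e /subnKC <-; elim: (e - d)%N => [|k IH]; first by rewrite addn0.
by rewrite addnS (leq_trans (hc _)).
Qed.

Lemma window (c : nat -> nat) (P : pred nat) h : (0 < h)%N ->
  (forall d, c d.+1 <= c d)%N ->
  (forall d, 0 < d -> P d -> h <= d)%N ->
  (forall d e, P d -> P e -> d < e -> h <= e - d)%N ->
  forall N, (h * \sum_(1 <= d < N) (c d * P d) <= \sum_(1 <= d < N) c d)%N.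
Proof.
move=> h0 hc hP1 hP2.
elim/ltn_ind => N IH.
case: (leqP N h) => hN.
  rewrite big_nat_cond big1 ?muln0 // => d /andP[/andP[d1 dN] _].
  case Pd: (P d); last by rewrite muln0.
  by have := hP1 d d1 Pd; lia.
case: N IH hN => [|M] IH hN; first by lia.
have M1 : (1 <= M)%N by lia.
case PM: (P M).
  set K := (M - h).+1.
  have K1 : (1 <= K <= M.+1)%N by rewrite /K; lia.
  case/andP: K1 => K1 K2.
  rewrite (big_cat_nat K1 K2) [in X in (_ <= X)%N](big_cat_nat K1 K2) /=.
  rewrite mulnDr leq_add //; first by apply: IH; rewrite /K; lia.
  rewrite big_nat_recr /=; last by rewrite /K; lia.
  rewrite PM muln1 big_nat_cond big1 ?add0n; last first.
    move=> d /andP[/andP[d1 dN] _].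
    case Pd: (P d); last by rewrite muln0.
    by have := hP2 d M Pd PM dN; rewrite /K in d1; lia.
  apply: leq_trans (_ : \sum_(K <= i < M.+1) c M <= _)%N.
    by rewrite sum_nat_const_nat /K; apply: leq_mul => //; lia.
  rewrite big_nat_cond [X in (_ <= X)%N]big_nat_cond; apply: leq_sum => d /andP[/andP[_ dM] _].
  by apply: nonincr.
rewrite big_nat_recr //= PM muln0 addn0.
apply: leq_trans (IH M (ltnSn _)) _.
by rewrite big_nat_recr //= leq_addr.
Qed.

Section Walk.
Variable R : realType.
Variable n' : nat.
Local Notation n := n'.+1.

Local Open Scope nat_scope.
Definition mm t i := (n' * t + i.*2)%N.

Lemma ident1 x (k : 'I_n) : (x %% n == (ordS k : nat)) = ((x + n') %% n == k).
Proof.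
rewrite /= -[in RHS](modn_small (ltn_ord k)) -(eqn_modDr 1 (x + n')) -addnA addn1 modnDr addn1.
by [].
Qed.

Lemma ident2 x (k : 'I_n) : (x %% n == (ord_pred k : nat)) = ((x + 1) %% n == k).
Proof.
rewrite /= -[in RHS](modn_small (ltn_ord k)) -(eqn_modDr n' (x + 1)) -addnA add1n modnDr addnS.
by [].
Qed.

Local Open Scope ring_scope.
Lemma iterE t (k : 'I_n) : iter t (@Lop R n) (@e0 R n) k =
  (\sum_(i < t.+1) 'C(t, i) * nat_of_bool ((mm t i %% n)%N == k))%:R / 2 ^+ t.
Proof.
elim: t k => [|t IH] k.
  by rewrite big_ord1 /= bin0 mul1n expr0 divr1 /e0 /mm muln0 mod0n eq_sym.
rewrite iterS /Lop !IH.
rewrite (eq_bigr _ (fun (i : 'I_t.+1) _ => congr1 (fun b => 'C(t,i) * nat_of_bool b)%N (ident1 (mm t i) k))).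
rewrite (eq_bigr _ (fun (i : 'I_t.+1) _ => congr1 (fun b => 'C(t,i) * nat_of_bool b)%N (ident2 (mm t i) k))).
have -> : (\sum_(i < t.+2) 'C(t.+1, i) * nat_of_bool ((mm t.+1 i %% n)%N == k) =
   \sum_(i < t.+1) 'C(t, i) * nat_of_bool (((mm t i + n') %% n)%N == k) +
   \sum_(i < t.+1) 'C(t, i) * nat_of_bool (((mm t i + 1) %% n)%N == k))%N.
  rewrite (pascal t (fun i => nat_of_bool ((mm t.+1 i %% n)%N == k))).
  congr (_ + _)%N; apply: eq_bigr => i _; congr (_ * nat_of_bool (_ == _))%N.
    by congr (_ %% _)%N; rewrite /mm mulnS; lia.
  by rewrite -[in RHS](modnDr _ n); congr (_ %% _)%N; rewrite /mm mulnS; lia.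
rewrite natrD exprS.
have h2 : (2 : R) ^+ t != 0 by rewrite expf_neq0 // pnatr_eq0.
field.
by rewrite expf_neq0 // pnatr_eq0.
Qed.


Lemma sumL (v : 'I_n -> R) : \sum_k Lop v k = \sum_k v k.
Proof.
have e1 : \sum_k v (ordS k) = \sum_k v k by rewrite [RHS](reindex_inj (@ordS_inj n)).
have e2 : \sum_k v (ord_pred k) = \sum_k v k by rewrite [RHS](reindex_inj (@ord_pred_inj n)).
rewrite /Lop -mulr_suml big_split /= e1 e2.
by field.
Qed.

Lemma adjL (a b : 'I_n -> R) : dotv a (Lop b) = dotv (Lop a) b.
Proof.
rewrite /dotv /Lop.
have e1 : \sum_k a k * b (ordS k) = \sum_k a (ord_pred k) * b k.
  rewrite [LHS](reindex_inj (@ord_pred_inj n)) /=.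
  by apply: eq_bigr => k _; rewrite ord_predK.
have e2 : \sum_k a k * b (ord_pred k) = \sum_k a (ordS k) * b k.
  rewrite [LHS](reindex_inj (@ordS_inj n)) /=.
  by apply: eq_bigr => k _; rewrite ordSK.
have -> : \sum_k a k * ((b (ordS k) + b (ord_pred k)) / 2) =
  (\sum_k a k * b (ordS k) + \sum_k a k * b (ord_pred k)) / 2.
  by rewrite -big_split mulr_suml /=; apply: eq_bigr => k _; ring.
have -> : \sum_k (a (ordS k) + a (ord_pred k)) / 2 * b k =
  (\sum_k a (ordS k) * b k + \sum_k a (ord_pred k) * b k) / 2.
  by rewrite -big_split mulr_suml /=; apply: eq_bigr => k _; ring.
by rewrite e1 e2 addrC.
Qed.

Lemma adjiter t (a b : 'I_n -> R) : dotv a (iter t (@Lop R n) b) = dotv (iter t (@Lop R n) a) b.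
Proof.
elim: t a => [|t IH] a //.
by rewrite iterS adjL IH -iterSr.
Qed.

Lemma sum_iter t : \sum_k iter t (@Lop R n) (@e0 R n) k = 1.
Proof.
elim: t => [|t IH]; last by rewrite iterS sumL.
rewrite /= big_ord_recl /e0 /= big1 ?addr0 //.
Qed.

Lemma dot_e0 v : dotv (@e0 R n) v = v ord0.
Proof.
rewrite /dotv big_ord_recl /e0 /= mul1r big1 ?addr0 // => i _.
by rewrite mul0r.
Qed.

Lemma cs (u : 'I_n -> R) : \sum_k u k = 1 -> 1 / n%:R <= dotv u u.
Proof.
move=> hu.
have hn : (n%:R : R) != 0 by rewrite pnatr_eq0.
have : 0 <= \sum_k (u k - 1 / n%:R) ^+ 2 by apply: sumr_ge0 => k _; exact: sqr_ge0.
have -> : \sum_k (u k - 1 / n%:R) ^+ 2 =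
  \sum_k (u k * u k) - 2 / n%:R * \sum_k u k + \sum_(k < n) (1 / n%:R) ^+ 2.
  rewrite mulr_sumr -sumrB -big_split /=; apply: eq_bigr => k _; ring.
rewrite hu sumr_const card_ord /dotv => h.
have e : 1 / n%:R = \sum_k u k * u k - (\sum_k u k * u k - 2 / n%:R * 1 + (1 / n%:R) ^+ 2 *+ n) by field.
by rewrite -subr_ge0 e opprB addrC subrK.
Qed.
End Walk.

Local Close Scope ring_scope.

Lemma split_sym (f : nat -> nat) t : (forall d, 1 <= d <= t -> f (t - d) = f (t + d)) ->
  \sum_(i < (2 * t).+1) f i = f t + 2 * \sum_(1 <= d < t.+1) f (t + d).
Proof.
move=> hs.
rewrite -(big_mkord xpredT f).
rewrite (@big_cat_nat _ _ _ t 0 (2 * t).+1) //; last by lia.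
have eL : \sum_(0 <= i < t) f i = \sum_(1 <= d < t.+1) f (t + d).
  rewrite big_nat_rev big_add1 /=.
  apply: eq_big_nat => i /andP[_ it].
  by rewrite add0n hs //; lia.
have eR : \sum_(t.+1 <= i < (2 * t).+1) f i = \sum_(1 <= d < t.+1) f (t + d).
  rewrite -add1n big_addn.
  have -> : ((2 * t).+1 - t = t.+1) by lia.
  by apply: eq_big_nat => i _; rewrite addnC.
rewrite (@big_ltn _ _ _ t) /=; last by lia.
rewrite eL eR; lia.
Qed.

Section Main.
Variable n' tau : nat.
Local Notation n := n'.+1.

Lemma ind_plus d : (n %| mm n' (2 * tau) (tau + d)) = (n %| d.*2).
Proof.
rewrite (_ : mm n' (2 * tau) (tau + d) = n * (2 * tau) + d.*2); last by rewrite /mm; nia.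
by rewrite dvdn_addr // dvdn_mulr.
Qed.

Lemma ind_minus d : d <= tau -> (n %| mm n' (2 * tau) (tau - d)) = (n %| d.*2).
Proof.
move=> hd.
have hs : n %| mm n' (2 * tau) (tau - d) + d.*2.
  by rewrite (_ : _ + _ = n * (2 * tau)) ?dvdn_mulr // /mm; nia.
apply/idP/idP => H.
  by rewrite -(dvdn_addr _ H).
by rewrite -(dvdn_addl _ H).
Qed.

Definition Bsum := \sum_(1 <= d < tau.+1) 'C(2 * tau, tau + d) * (n %| d.*2).
Definition Tot := \sum_(1 <= d < tau.+1) 'C(2 * tau, tau + d).

Lemma num_split : \sum_(i < (2 * tau).+1) 'C(2 * tau, i) * nat_of_bool ((mm n' (2 * tau) i %% n) == 0) =
  'C(2 * tau, tau) + 2 * Bsum.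
Proof.
rewrite (split_sym (fun i => 'C(2 * tau, i) * nat_of_bool ((mm n' (2 * tau) i %% n) == 0))).
  congr (_ + _).
    have := ind_plus 0; rewrite addn0 /dvdn => ->.
    by rewrite muln1.
  congr (2 * _); apply: eq_big_nat => d _.
  by have := ind_plus d; rewrite /dvdn => ->.
move=> d /andP[d1 dt].
have := ind_plus d; have := ind_minus d dt; rewrite /dvdn => -> ->.
congr (_ * _).
rewrite -bin_sub; last by lia.
congr 'C(_, _); lia.
Qed.

Lemma tot_split : 2 ^ (2 * tau) = 'C(2 * tau, tau) + 2 * Tot.
Proof.
rewrite -sumC (split_sym (fun i => 'C(2 * tau, i))) //.
move=> d /andP[d1 dt].
rewrite -bin_sub; last by lia.
congr 'C(_, _); lia.
Qed.

Lemma c_noninc d : 'C(2 * tau, tau + d.+1) <= 'C(2 * tau, tau + d).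
Proof.
have e := mul_bin_left (2 * tau) (tau + d).
rewrite addnS -(leq_pmul2l (ltn0Sn (tau + d))) e.
by apply: leq_mul => //; lia.
Qed.

Lemma window_app : 2 <= n -> (n %/ 2) * Bsum <= Tot.
Proof.
move=> hn.
apply: (window (fun d => 'C(2 * tau, tau + d)) (fun d => n %| d.*2)).
- lia.
- exact: c_noninc.
- move=> d d0 Pd.
  have := dvdn_leq _ Pd; rewrite -addnn => H.
  have := H ltac:(lia); lia.
- move=> d e Pd Pe de.
  have := dvdn_sub Pe Pd; rewrite -doubleB => Pde.
  have := dvdn_leq _ Pde; rewrite -addnn => H.
  have := H ltac:(lia); lia.
Qed.

End Main.

Local Open Scope ring_scope.

Lemma sq_ge1 (R : realType) (x : R) : 0 <= x -> 1 <= x ^+ 2 -> 1 <= x.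
Proof. move=> h0 h1; nra. Qed.

Lemma sq_le1 (R : realType) (x : R) : 0 <= x -> x ^+ 2 <= 1 -> x <= 1.
Proof. move=> h0 h1; nra. Qed.

Theorem mainTheorem5 (R : realType) (n tau : nat) (hn : (3 <= n)%N) (htau : (1 <= tau)%N) :
  Num.max (1 / n%:R) (1 / (2 * Num.sqrt (tau%:R))) <=
    dotv (@e0 R n) (iter (2 * tau)%N (@Lop R n) (@e0 R n)) /\
  dotv (@e0 R n) (iter (2 * tau)%N (@Lop R n) (@e0 R n)) <=
    4 / n%:R + 1 / Num.sqrt (pi * tau%:R).
Proof.
case: n hn => [//|n'] hn.
set p := dotv _ _.
have Q0 : (0 : R) < 2 ^+ (2 * tau) by rewrite exprn_gt0.
have hp : p = ('C(2 * tau, tau) + 2 * Bsum n' tau)%:R / 2 ^+ (2 * tau).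
  by rewrite /p dot_e0 iterE num_split.
have hA : ('C(2 * tau, tau)%:R : R) / 2 ^+ (2 * tau) = a R tau.
  by rewrite /a exprM mul2n (_ : (2 : R) ^+ 2 = 4) //; rewrite expr2; ring.
have a0 : 0 <= a R tau by rewrite -hA divr_ge0 // ltW.
have pA : a R tau <= p.
  by rewrite hp -hA ler_pM2r ?invr_gt0 // ler_nat leq_addr.
have t0 : (0 : R) < tau%:R by rewrite ltr0n.
split.
  rewrite ge_max; apply/andP; split.
    rewrite /p mul2n -addnn iterD adjiter.
    by apply: cs; exact: sum_iter.
  apply: le_trans pA.
  have hs : 0 < 2 * Num.sqrt (tau%:R : R) by rewrite mulr_gt0 // sqrtr_gt0.
  rewrite ler_pdivrMr // mulrC; apply: sq_ge1.
    by rewrite mulr_ge0 // ltW.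
  rewrite exprMn exprMn sqr_sqrtr; last exact: ltW.
  have := central_lb R tau htau.
  have -> : (2 : R) ^+ 2 = 4 by rewrite expr2; ring.
  by [].
rewrite hp natrD mulrDl hA addrC.
apply: lerD; last first.
have hs : 0 < Num.sqrt (pi * tau%:R : R) by rewrite sqrtr_gt0 mulr_gt0 // pi_gt0.
rewrite ler_pdivlMr //; apply: sq_le1.
  by rewrite mulr_ge0 // ltW.
rewrite exprMn sqr_sqrtr; last by rewrite mulr_ge0 ?pi_ge0 // ltW.
by have := wallis R tau htau; rewrite mulrC.
have hn2 : (2 <= n'.+1)%N by lia.
have hw := window_app n' tau hn2.
have ht := tot_split tau.
have hN : (n'.+1 * (2 * Bsum n' tau) <= 4 * 2 ^ (2 * tau))%N.
  have h4 : (n'.+1 <= 4 * (n'.+1 %/ 2))%N by lia.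
  apply: leq_trans (leq_mul h4 (leqnn _)) _.
  rewrite ht; nia.
rewrite ler_pdivrMr // mulrAC ler_pdivlMr ?ltr0n //.
rewrite -natrX -!natrM ler_nat.
by rewrite mulnC.
Qed.
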